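(* Let $d\ge 2$. If the graph of a stacked $(d+1)$-polytope is $d$-ball packable, then its $d$-ball packing $\mathcal S$ is stress-free: the only function $T$ on the edges of the tangency graph $G(\mathcal S)$ satisfying $\sum_{j:\,S_iS_j\in E(G(\mathcal S))}T(S_iS_j)(\mathbf v_j-\mathbf v_i)=0$ for every ball $S_i\in\mathcal S$ is $T\equiv 0$.
   Context: A stacked polytope is one obtained from a simplex by repeatedly gluing a new simplex onto a facet. A $d$-ball in $\hat{\mathbb R}^d$ is a closed ball, closed exterior of an open ball with $\infty$, or a closed half-space with $\infty$; a $d$-ball packing is a collection of $d$-balls with disjoint interiors; its tangency graph joins balls meeting in exactly one point; a graph is $d$-ball packable if isomorphic to the tangency graph of some $d$-ball packing. The vectors $\mathbf v_i$ are defined as follows: map the packing by stereographic projection (after a Möbius transformation if necessary) to a packing of spherical caps on $\mathbb S^d\subset\mathbb R^{d+1}$, each of spherical radius $\theta_i<\pi/2$ with center $\mathbf c_i$; then $\mathbf v_i=\mathbf c_i/\cos\theta_i$ is the polar vertex of the cap corresponding to $S_i$ (the point with $\partial C_i=\mathbb S^d\cap\{x:\langle x,\mathbf v_i\rangle=1\}$). *)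

(* Defs.v *)
From mathcomp Require Import all_boot.
From Stdlib Require Import Reals.
Set Implicit Arguments. Unset Strict Implicit. Unset Printing Implicit Defensive.

Definition dotp {m : nat} (x y : 'I_m -> R) : R :=
  \big[Rplus/0%R]_(k < m) (x k * y k)%R.

Definition vsub {m : nat} (x y : 'I_m -> R) : 'I_m -> R := fun k => (x k - y k)%R.

Definition on_sphere (d : nat) (x : 'I_d.+1 -> R) : Prop := dotp x x = 1%R.

(* None is the point at infinity *)
Definition hpoint (d : nat) := option ('I_d -> R).

(* d-balls of \hat R^d:
   BClosed a r : closed ball {x : |x - a| <= r}
   BExt a r    : closed exterior {x : |x - a| >= r} of the open ball, together with oo
   BHalf u b   : closed half-space {x : <x,u> >= b}, together with oo *)
Inductive hball (d : nat) : Type :=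
| BClosed of ('I_d -> R) & R
| BExt of ('I_d -> R) & R
| BHalf of ('I_d -> R) & R.

Definition valid_ball (d : nat) (B : hball d) : Prop :=
  match B with
  | BClosed _ r => (0 < r)%R
  | BExt _ r => (0 < r)%R
  | BHalf u _ => exists k, u k <> 0%R
  end.

Definition in_ball (d : nat) (B : hball d) (p : hpoint d) : Prop :=
  match B, p with
  | BClosed a r, Some x => (dotp (vsub x a) (vsub x a) <= r * r)%R
  | BClosed _ _, None => False
  | BExt a r, Some x => (r * r <= dotp (vsub x a) (vsub x a))%R
  | BExt _ _, None => True
  | BHalf u b, Some x => (b <= dotp x u)%R
  | BHalf _ _, None => True
  end.

Definition in_interior (d : nat) (B : hball d) (p : hpoint d) : Prop :=
  match B, p with
  | BClosed a r, Some x => (dotp (vsub x a) (vsub x a) < r * r)%R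
  | BClosed _ _, None => False
  | BExt a r, Some x => (r * r < dotp (vsub x a) (vsub x a))%R
  | BExt _ _, None => True
  | BHalf u b, Some x => (b < dotp x u)%R
  | BHalf _ _, None => False
  end.

Definition is_packing (d n : nat) (B : 'I_n -> hball d) : Prop :=
  (forall i, valid_ball (B i)) /\
  (forall i j, i <> j -> ~ (exists p, in_interior (B i) p /\ in_interior (B j) p)).

Definition tangent (d n : nat) (B : 'I_n -> hball d) (i j : 'I_n) : Prop :=
  i <> j /\ exists! p : hpoint d, in_ball (B i) p /\ in_ball (B j) p.

Definition stereo (d : nat) (p : hpoint d) : 'I_d.+1 -> R :=
  match p with
  | None => fun k => match unlift ord_max k with Some _ => 0%R | None => 1%R end
  | Some x => fun k =>
      let s := dotp x x in
      match unlift ord_max k with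
      | Some k' => (2 * x k' / (1 + s))%R
      | None => ((s - 1) / (s + 1))%R
      end
  end.

Definition in_cap (d : nat) (c : 'I_d.+1 -> R) (theta : R) (y : 'I_d.+1 -> R) : Prop :=
  on_sphere y /\ (cos theta <= dotp y c)%R.

Definition cap_of_ball (d : nat) (B : hball d) (c : 'I_d.+1 -> R) (theta : R) : Prop :=
  forall y, in_cap c theta y <-> exists p, in_ball B p /\ y = stereo p.

Definition polar_vertex (d : nat) (c : 'I_d.+1 -> R) (theta : R) : 'I_d.+1 -> R :=
  fun k => (c k / cos theta)%R.

(* stacked_graph k n Fs adj : starting from a k-simplex on vertices 0..k,
   repeatedly glue a new simplex onto a facet; vertices are 0..n-1, Fs is the
   current list of facets (each a list of k vertices), adj the graph. *)
Inductive stacked_graph (k : nat) : nat -> seq (seq nat) -> (nat -> nat -> Prop) -> Prop :=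
| stacked_simplex :
    stacked_graph k k.+1
      [seq [seq i <- iota 0 k.+1 | i != j] | j <- iota 0 k.+1]
      (fun i j => i <> j /\ (i <= k)%N /\ (j <= k)%N)
| stacked_glue n Fs adj f :
    stacked_graph k n Fs adj -> f \in Fs ->
    stacked_graph k n.+1
      (rem f Fs ++ [seq n :: rem u f | u <- f])
      (fun i j => adj i j \/ (i = n /\ j \in f) \/ (j = n /\ i \in f)).

(* Main.v *)
Require Import Defs.
From HB Require Import structures.
From mathcomp Require Import all_boot.
From Stdlib Require Import Reals Lra Psatz FunctionalExtensionality.
Set Warnings "-notation-overridden,-redundant-canonical-projection".
Open Scope R_scope.
Set Implicit Arguments. Unset Strict Implicit.
HB.instance Definition _ := Monoid.isComLaw.Build R 0%R Rplus
  (fun x y z => esym (Rplus_assoc x y z)) Rplus_comm Rplus_0_l.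

Lemma sumD n (F G : 'I_n -> R) : \big[Rplus/0]_(i < n) (F i + G i) = \big[Rplus/0]_(i < n) F i + \big[Rplus/0]_(i < n) G i.
Proof. by rewrite big_split. Qed.

Lemma sumZ n c (F : 'I_n -> R) : \big[Rplus/0]_(i < n) (c * F i) = c * \big[Rplus/0]_(i < n) F i.
Proof.
symmetry; apply: (big_morph (fun x => c * x)).
- move=> x y /=; ring.
- ring.
Qed.

Lemma sum_ext n (F G : 'I_n -> R) : (forall i, F i = G i) -> \big[Rplus/0]_(i < n) F i = \big[Rplus/0]_(i < n) G i.
Proof. by move=> H; apply: eq_bigr => i _. Qed.

Lemma sum_ge0 n (F : 'I_n -> R) : (forall i, 0 <= F i) -> 0 <= \big[Rplus/0]_(i < n) F i.
Proof. move=> H; apply: big_ind => //; [lra| move=> x y; lra]. Qed.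

Lemma sum_delta n (k : 'I_n) (F : 'I_n -> R) :
  \big[Rplus/0]_(i < n) (if i == k then F i else 0) = F k.
Proof.
rewrite (bigD1 k) //= eqxx big1 ?Rplus_0_r // => i /negbTE -> //.
Qed.

Lemma sum_term_le n (k : 'I_n) (F : 'I_n -> R) : (forall i, 0 <= F i) ->
  F k <= \big[Rplus/0]_(i < n) F i.
Proof.
move=> H; rewrite (bigD1 k) //=.
rewrite -{1}(Rplus_0_r (F k)); apply: Rplus_le_compat_l.
by apply: big_ind => //; intros; try lra; apply: H.
Qed.

Lemma sum_two_le n (k l : 'I_n) (F : 'I_n -> R) : k != l -> (forall i, 0 <= F i) ->
  F k + F l <= \big[Rplus/0]_(i < n) F i.
Proof.
move=> kl H; rewrite (bigD1 k) //= (bigD1 l) /=; last by rewrite eq_sym.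
rewrite -Rplus_assoc -{1}(Rplus_0_r (F k + F l)); apply: Rplus_le_compat_l.
by apply: big_ind => //; intros; try lra; apply: H.
Qed.

Lemma dotpC m (x y : 'I_m -> R) : dotp x y = dotp y x.
Proof. by apply: sum_ext => k; ring. Qed.

Lemma dotp_lin m a b (x y z : 'I_m -> R) :
  dotp (fun k => a * x k + b * y k) z = a * dotp x z + b * dotp y z.
Proof.
rewrite /dotp -!sumZ -sumD; apply: sum_ext => k; ring.
Qed.

Lemma dotp_scal m a (x z : 'I_m -> R) :
  dotp (fun k => a * x k) z = a * dotp x z.
Proof. rewrite /dotp -!sumZ; apply: sum_ext => k; ring. Qed.

Lemma dotp_ext m (x x' y y' : 'I_m -> R) : (forall k, x k = x' k) -> (forall k, y k = y' k) ->
  dotp x y = dotp x' y'.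
Proof. by move=> H1 H2; apply: sum_ext => k; rewrite H1 H2. Qed.

Lemma dotp_ge0 m (x : 'I_m -> R) : 0 <= dotp x x.
Proof. apply: sum_ge0 => k; nra. Qed.

Lemma dotp_eq0 m (x : 'I_m -> R) : dotp x x = 0 -> forall k, x k = 0.
Proof.
move=> H k; have H2 : x k * x k <= dotp x x.
  by apply: (@sum_term_le _ k (fun i => x i * x i)) => i; nra.
rewrite H in H2; nra.
Qed.

Lemma CS m (x y : 'I_m -> R) : dotp x y * dotp x y <= dotp x x * dotp y y.
Proof.
have [Hy|Hy] : dotp y y = 0 \/ 0 < dotp y y by have := dotp_ge0 y; lra.
- have : dotp x y = 0.
    rewrite /dotp big1 // => k _; rewrite (dotp_eq0 Hy k); ring.
  move=> ->; rewrite Hy; lra.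
- set a := dotp y y; set b := dotp x y.
  have H := dotp_ge0 (fun k => a * x k + (- b) * y k).
  have E : dotp (fun k => a * x k + (- b) * y k) (fun k => a * x k + (- b) * y k)
     = a * (a * dotp x x - b * b).
    rewrite dotp_lin (dotpC x) (dotpC y) !dotp_lin (dotpC y x); rewrite /a /b; ring.
  rewrite E in H.
  have ? : 0 <= a * dotp x x - b * b.
    apply: (Rmult_le_reg_l a) => //; lra.
  lra.
Qed.

Lemma unit_dot_le m (x y : 'I_m -> R) : dotp x x = 1 -> dotp y y = 1 -> -1 <= dotp x y <= 1.
Proof. move=> Hx Hy; have := CS x y; rewrite Hx Hy; nra. Qed.

Lemma dotp_lin2 m a b (x y z : 'I_m -> R) :
  dotp x (fun k => a * y k + b * z k) = a * dotp x y + b * dotp x z.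
Proof. by rewrite dotpC dotp_lin (dotpC y) (dotpC z). Qed.

Lemma div_cross x y a b : a <> 0 -> b <> 0 -> x / a = y / b -> x * b = y * a.
Proof.
move=> ha hb H; have E1 : x = (x / a) * a by field.
rewrite E1 H; field; auto.
Qed.

Lemma stereo_inj d (p q : hpoint d) : stereo p = stereo q -> p = q.
Proof.
move=> H.
have Hm := f_equal (fun f => f ord_max) H; simpl in Hm.
case: p q H Hm => [x|] [y|] H; rewrite /stereo /= ?unlift_none => Hm //.
- set s1 := dotp x x in Hm; set s2 := dotp y y in Hm.
  have h1 : 0 <= s1 by apply: dotp_ge0.
  have h2 : 0 <= s2 by apply: dotp_ge0.
  have E : s1 = s2.
    have := @div_cross (s1 - 1) (s2 - 1) (s1 + 1) (s2 + 1) ltac:(lra) ltac:(lra) Hm.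
    nra.
  f_equal; apply: functional_extensionality => k.
  have Hk := f_equal (fun f => f (lift ord_max k)) H; simpl in Hk.
  rewrite liftK -/s1 -/s2 -E in Hk.
  have := @div_cross (2 * x k) (2 * y k) (1 + s1) (1 + s1) ltac:(lra) ltac:(lra) Hk.
  nra.
- set s1 := dotp x x in Hm.
  have h1 : 0 <= s1 by apply: dotp_ge0.
  have := @div_cross (s1 - 1) 1 (s1 + 1) 1 ltac:(lra) ltac:(lra) (etrans Hm (esym (Rdiv_1_r 1))).
  lra.
- set s1 := dotp y y in Hm.
  have h1 : 0 <= s1 by apply: dotp_ge0.
  have := @div_cross (s1 - 1) 1 (s1 + 1) 1 ltac:(lra) ltac:(lra) (etrans (esym Hm) (esym (Rdiv_1_r 1))).
  lra.
Qed.

Definition bv m (k : 'I_m) : 'I_m -> R := fun j => if j == k then 1 else 0.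

Lemma dotp_bv m (k : 'I_m) (x : 'I_m -> R) : dotp (bv k) x = x k.
Proof.
rewrite /dotp -(sum_delta k x); apply: sum_ext => i; rewrite /bv.
by case: (i == k); ring.
Qed.

Lemma orth_unit m (Hm : (1 < m)%nat) (z : 'I_m -> R) : dotp z z = 1 ->
  exists e, dotp e e = 1 /\ dotp e z = 0.
Proof.
move=> Hz.
have [k Hk] : exists k : 'I_m, z k * z k < 1.
  have h0 : (0 < m)%nat by apply: ltn_trans Hm.
  pose k0 := Ordinal h0; pose k1 := Ordinal Hm.
  have Hne : k0 != k1 by [].
  have := @sum_two_le m k0 k1 (fun i => z i * z i) Hne (fun i => ltac:(nra)).
  rewrite -/(dotp z z) Hz => H2.
  case: (Rlt_le_dec (z k0 * z k0) 1) => h; first by exists k0.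
  exists k1; have ? : 0 <= z k1 * z k1 by nra. lra.
pose e' := fun j => 1 * bv k j + (- z k) * z j.
have Ee'z : dotp e' z = 0.
  rewrite /e' dotp_lin dotp_bv Hz; ring.
have Ee'e' : dotp e' e' = 1 - z k * z k.
  rewrite {1}/e' dotp_lin dotp_bv (dotpC z e') Ee'z /e' /bv eqxx; ring.
set N := sqrt (1 - z k * z k).
have HN : 0 < N by apply: sqrt_lt_R0; lra.
have HN2 : N * N = 1 - z k * z k by apply: sqrt_sqrt; lra.
exists (fun j => (/ N) * e' j); split.
- rewrite dotp_scal dotpC dotp_scal Ee'e' -HN2; field; lra.
- rewrite dotp_scal Ee'z; ring.
Qed.

Lemma cap_tangent m (Hm : (1 < m)%nat) (u w : 'I_m -> R) a sa b sb :
  dotp u u = 1 -> dotp w w = 1 -> 0 < a -> 0 < sa -> 0 < b -> 0 < sb ->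
  a * a + sa * sa = 1 -> b * b + sb * sb = 1 ->
  (exists y, dotp y y = 1 /\ a <= dotp y u /\ b <= dotp y w) ->
  (forall y y', dotp y y = 1 -> a <= dotp y u -> b <= dotp y w ->
       dotp y' y' = 1 -> a <= dotp y' u -> b <= dotp y' w -> y = y') ->
  dotp u w = a * b - sa * sb.
Proof.
move=> Hu Hw ha hsa hb hsb Ha Hb [y0 [Hy0 [Hp Hq]]] Huniq.
have Hge : a * b - sa * sb <= dotp u w.
  move: Hp Hq; move Ep : (dotp y0 u) => p; move Eq : (dotp y0 w) => q => Hp Hq.
  move Eg : (dotp u w) => g.
  pose u' := fun k => 1 * u k + (- p) * y0 k.
  pose w' := fun k => 1 * w k + (- q) * y0 k.
  have E1 : dotp u' w' = g - p * q.
    rewrite /u' /w' dotp_lin !dotp_lin2 (dotpC u y0) Hy0 Ep Eq Eg; ring.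
  have E2 : dotp u' u' = 1 - p * p.
    rewrite /u' dotp_lin !dotp_lin2 (dotpC u y0) Hy0 Hu Ep; ring.
  have E3 : dotp w' w' = 1 - q * q.
    rewrite /w' dotp_lin !dotp_lin2 (dotpC w y0) Hy0 Hw Eq; ring.
  have HC := CS u' w'; rewrite E1 E2 E3 in HC.
  have [_ hp1] := unit_dot_le Hy0 Hu; rewrite Ep in hp1.
  have [_ hq1] := unit_dot_le Hy0 Hw; rewrite Eq in hq1.
  have h1 : 0 <= 1 - p * p <= sa * sa by split; nra.
  have h2 : 0 <= 1 - q * q <= sb * sb by split; nra.
  have h3 : (g - p * q) * (g - p * q) <= (sa * sb) * (sa * sb).
    apply: Rle_trans HC _.
    have ? := Rmult_le_compat _ _ _ _ (proj1 h1) (proj1 h2) (proj2 h1) (proj2 h2). lra.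
  have h4 : - (sa * sb) <= g - p * q.
    have hC : 0 < sa * sb by nra.
    move: h3; move: (g - p * q) (sa * sb) hC => X C hC h3.
    case: (Rle_lt_dec (- C) X) => // hX; exfalso.
    have ? : 0 < (- X - C) * (- X + C) by apply: Rmult_lt_0_compat; lra.
    nra.
  have h5 : a * b <= p * q by nra.
  lra.
move: Hge; move Eg : (dotp u w) => g Hge.
case: (Req_dec g (a * b - sa * sb)) => // Hne.
have Hgt : a * b - sa * sb < g by lra.
exfalso.
have [del Edel] : exists del, del = g - (a * b - sa * sb) by eexists.
have Hdel : 0 < del by rewrite Edel; lra.
pose yv := fun k => sb * u k + sa * w k.
have Eyu : dotp yv u = sb + sa * g by rewrite /yv dotp_lin Hu (dotpC w u) Eg; ring.
have Eyw : dotp yv w = sb * g + sa by rewrite /yv dotp_lin Hw Eg; ring.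
have Eyy : dotp yv yv = sb * sb + sa * sa + 2 * sa * sb * g.
  rewrite {1}/yv dotp_lin (dotpC u) (dotpC w) Eyu Eyw; ring.
move: Eyy; move EN2 : (sb * sb + sa * sa + 2 * sa * sb * g) => N2 Eyy.
have P1 : 0 < sb + sa * g.
  have E : sb + sa * g - (a * (a * sb + b * sa) + sa * del) = sb * (1 - (a * a + sa * sa))
    by rewrite Edel; ring.
  rewrite Ha in E. have ? : 0 < a * (a * sb + b * sa) by apply: Rmult_lt_0_compat => //; apply: Rplus_lt_0_compat; apply: Rmult_lt_0_compat.
  have ? : 0 < sa * del by apply: Rmult_lt_0_compat.
  lra.
have Q1 : 0 < sa + sb * g.
  have E : sa + sb * g - (b * (b * sa + a * sb) + sb * del) = sa * (1 - (b * b + sb * sb))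
    by rewrite Edel; ring.
  rewrite Hb in E. have ? : 0 < b * (b * sa + a * sb) by apply: Rmult_lt_0_compat => //; apply: Rplus_lt_0_compat; apply: Rmult_lt_0_compat.
  have ? : 0 < sb * del by apply: Rmult_lt_0_compat.
  lra.
have Ea : a * a = 1 - sa * sa by lra.
have Eb : b * b = 1 - sb * sb by lra.
have F2 : (g + sa * sb) * (g + sa * sb) - (a * a) * (b * b) = del * (del + 2 * (a * b))
  by rewrite Edel; ring.
have Hpos : 0 < del * (del + 2 * (a * b)).
  apply: Rmult_lt_0_compat => //; nra.
have P2 : a * a * N2 < (sb + sa * g) * (sb + sa * g).
  have F : (sb + sa * g) * (sb + sa * g) - a * a * N2 =
      sa * sa * ((g + sa * sb) * (g + sa * sb) - (a * a) * (b * b)).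
    rewrite -EN2 Ea Eb; ring.
  rewrite F2 in F.
  have ? : 0 < sa * sa * (del * (del + 2 * (a * b))).
    apply: Rmult_lt_0_compat => //; nra.
  lra.
have Q2 : b * b * N2 < (sa + sb * g) * (sa + sb * g).
  have F : (sa + sb * g) * (sa + sb * g) - b * b * N2 =
      sb * sb * ((g + sa * sb) * (g + sa * sb) - (a * a) * (b * b)).
    rewrite -EN2 Ea Eb; ring.
  rewrite F2 in F.
  have ? : 0 < sb * sb * (del * (del + 2 * (a * b))).
    apply: Rmult_lt_0_compat => //; nra.
  lra.
have HN2 : 0 < N2.
  have := CS yv u; rewrite Eyu Hu Eyy => h.
  nra.
move EN : (sqrt N2) => N.
have HN : 0 < N by rewrite -EN; apply: sqrt_lt_R0.
have HNN : N * N = N2 by rewrite -EN; apply: sqrt_sqrt; lra.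
pose ys := fun k => (/ N) * yv k.
have Hys : dotp ys ys = 1.
  rewrite /ys dotp_scal dotpC dotp_scal Eyy -HNN; field; lra.
have Hpsu : dotp ys u = (sb + sa * g) / N by rewrite /ys dotp_scal Eyu; field; lra.
have Hpsw : dotp ys w = (sb * g + sa) / N by rewrite /ys dotp_scal Eyw; field; lra.
have Hps : a < dotp ys u.
  rewrite Hpsu; apply: (Rmult_lt_reg_r N) => //.
  have -> : (sb + sa * g) / N * N = sb + sa * g by field; lra.
  nra.
have Hqs : b < dotp ys w.
  rewrite Hpsw; apply: (Rmult_lt_reg_r N) => //.
  have -> : (sb * g + sa) / N * N = sa + sb * g by field; lra.
  nra.
have [_ hps1] := unit_dot_le Hys Hu.
have [_ hqs1] := unit_dot_le Hys Hw.
move: Hps hps1; move Eps : (dotp ys u) => ps Hps hps1.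
move: Hqs hqs1; move Eqs : (dotp ys w) => qs Hqs hqs1.
have [e [He1 He2]] := orth_unit Hm Hys.
move Er : (Rmin ((ps - a) / 2) ((qs - b) / 2)) => r.
have hr1 : r <= (ps - a) / 2 by rewrite -Er; apply: Rmin_l.
have hr2 : r <= (qs - b) / 2 by rewrite -Er; apply: Rmin_r.
have hr0 : 0 < r by rewrite -Er; apply: Rmin_glb_lt; lra.
move Es : (sqrt (1 - r * r)) => s.
have hss : s * s = 1 - r * r by rewrite -Es; apply: sqrt_sqrt; nra.
have hs0 : 0 <= s by rewrite -Es; apply: sqrt_pos.
have hs1 : 1 - r <= s by nra.
pose y' := fun k => s * ys k + r * e k.
have Hy'y' : dotp y' y' = 1.
  rewrite {1}/y' dotp_lin !dotp_lin2 Hys He1 (dotpC ys e) He2; nra.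
have [heu _] := unit_dot_le He1 Hu.
have [hew _] := unit_dot_le He1 Hw.
have Hy'u : a <= dotp y' u.
  rewrite /y' dotp_lin Eps.
  have ? : (1 - r) * ps <= s * ps by apply: Rmult_le_compat_r; lra.
  have ? : r * (-1) <= r * dotp e u by apply: Rmult_le_compat_l; lra.
  have ? : r * ps <= r * 1 by apply: Rmult_le_compat_l; lra.
  lra.
have Hy'w : b <= dotp y' w.
  rewrite /y' dotp_lin Eqs.
  have ? : (1 - r) * qs <= s * qs by apply: Rmult_le_compat_r; lra.
  have ? : r * (-1) <= r * dotp e w by apply: Rmult_le_compat_l; lra.
  have ? : r * qs <= r * 1 by apply: Rmult_le_compat_l; lra.
  lra.
have H1 : a <= dotp ys u by rewrite Eps; lra.
have H2 : b <= dotp ys w by rewrite Eqs; lra.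
have Heq := Huniq ys y' Hys H1 H2 Hy'y' Hy'u Hy'w.
have := f_equal (fun z => dotp z e) Heq.
rewrite /= /y' dotp_lin (dotpC ys e) He2 He1 => ?; lra.
Qed.

Open Scope R_scope.

Lemma dot_stress n m (v : 'I_n -> 'I_m -> R) (i l : 'I_n) (x : 'I_n -> R) :
  (forall k, \big[Rplus/0]_(j < n) (x j * (v j k - v i k)) = 0) ->
  \big[Rplus/0]_(j < n) (x j * (dotp (v j) (v l) - dotp (v i) (v l))) = 0.
Proof.
move=> H.
have H0 : \big[Rplus/0]_(k < m) (\big[Rplus/0]_(j < n) (x j * (v j k - v i k)) * v l k) = 0.
  by rewrite big1 // => k _; rewrite H; ring.
apply: (eq_trans _ H0); symmetry.
transitivity (\big[Rplus/0]_(k < m) \big[Rplus/0]_(j < n) (v l k * (x j * (v j k - v i k)))).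
  by apply: eq_bigr => k _; rewrite Rmult_comm -sumZ.
rewrite exchange_big /=; apply: eq_bigr => j _.
rewrite /dotp.
have -> : \big[Rplus/0]_(k < m) (v j k * v l k) - \big[Rplus/0]_(k < m) (v i k * v l k)
   = \big[Rplus/0]_(k < m) (v j k * v l k) + (-1) * \big[Rplus/0]_(k < m) (v i k * v l k) by ring.
rewrite -sumZ -sumD -sumZ; apply: eq_bigr => k _; ring.
Qed.

Lemma key_alg n m (v : 'I_n -> 'I_m -> R) (t : 'I_n -> R) (tg : 'I_n -> 'I_n -> Prop)
  (i : 'I_n) (x : 'I_n -> R) :
  (forall j, 0 < t j) ->
  (forall j, dotp (v j) (v j) = 1 + t j * t j) ->
  (forall j l, tg j l -> dotp (v j) (v l) = 1 - t j * t l) ->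
  (forall j, x j <> 0 -> tg i j) ->
  (forall j l, x j <> 0 -> x l <> 0 -> j <> l -> tg j l) ->
  (forall k, \big[Rplus/0]_(j < n) (x j * (v j k - v i k)) = 0) ->
  forall j, x j = 0.
Proof.
move=> Ht Hvv Hvw Hsupp Hcl Hst.
set S := \big[Rplus/0]_(j < n) (x j * t j).
set P := \big[Rplus/0]_(j < n) x j.
have E1 : S + t i * P = 0.
  have Hpt : forall j, x j * (dotp (v j) (v i) - dotp (v i) (v i))
        = (- t i) * (x j * t j + t i * x j).
    move=> j; case: (Req_dec (x j) 0) => [->|hx]; first ring.
    rewrite dotpC (Hvw _ _ (Hsupp _ hx)) Hvv; ring.
  have h := dot_stress i Hst.
  rewrite (eq_bigr _ (fun j _ => Hpt j)) sumZ sumD sumZ -/S -/P in h.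
  have hti := Ht i.
  case: (Rmult_integral _ _ h) => //; lra.
have E2 : forall l, x l <> 0 -> x l * t l = S.
  move=> l hl.
  have Hpt : forall j, x j * (dotp (v j) (v l) - dotp (v i) (v l))
        = t l * (t i * x j + (-1) * (x j * t j)) + (if j == l then 2 * x l * t l * t l else 0).
    move=> j; case: (Req_dec (x j) 0) => [hx|hx].
    + case: eqP => [ejl|_]; first by rewrite ejl in hx.
      rewrite hx; ring.
    + have hij := Hsupp _ hx; have hil := Hsupp _ hl.
      case: eqP => [->|hjl].
      * rewrite Hvv (Hvw _ _ hil); ring.
      * rewrite (Hvw _ _ (Hcl _ _ hx hl hjl)) (Hvw _ _ hil); ring.
  have h := dot_stress l Hst.
  rewrite (eq_bigr _ (fun j _ => Hpt j)) sumD sum_delta sumZ sumD sumZ sumZ -/S -/P in h.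
  have htl := Ht l; have hti := Ht i.
  have h2 : t l * (x l * t l - S) = 0.
    have -> : t l * (x l * t l - S) = (t l * (t i * P + -1 * S) + 2 * x l * t l * t l) / 2
      - t l * (S + t i * P) / 2 by field.
    rewrite h E1; field.
  case: (Rmult_integral _ _ h2) => h3; lra.
pose q := fun j => if Req_EM_T (x j) 0 then 0 else / t j.
have Eq : forall j, x j = S * q j.
  move=> j; rewrite /q; destruct (Req_EM_T (x j) 0) as [hx|hx]; simpl; first by rewrite hx; ring.
  rewrite -(E2 _ hx); have := Ht j; move=> ?; field; lra.
have EP : P = S * \big[Rplus/0]_(j < n) q j by rewrite -sumZ; apply: eq_bigr => j _; apply: Eq.
have HQ : 0 <= \big[Rplus/0]_(j < n) q j.
  apply: sum_ge0 => j; rewrite /q; destruct (Req_EM_T (x j) 0); simpl; first lra.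
  by apply: Rlt_le; apply: Rinv_0_lt_compat.
have HS : S = 0.
  move: HQ EP; move: (\big[Rplus/0]_(j < n) q j) => Q HQ EP.
  rewrite EP in E1.
  have h : S * (1 + t i * Q) = S + t i * (S * Q) by ring.
  rewrite E1 in h.
  have hti := Ht i.
  have ? : 0 < 1 + t i * Q by nra.
  case: (Rmult_integral _ _ h) => //; lra.
move=> j; rewrite Eq HS; ring.
Qed.

Close Scope R_scope.

Lemma stacked_inv k m Fs adj : stacked_graph k m Fs adj ->
  (forall a b, adj a b -> (a < m)%N /\ (b < m)%N) /\
  (forall f, f \in Fs -> (forall x, x \in f -> (x < m)%N) /\
      (forall x y, x \in f -> y \in f -> x <> y -> adj x y)).
Proof.
elim => [|n Fs0 adj0 f H [IH1 IH2] Hf].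
- split.
  + by move=> a b [_ [ha hb]]; split.
  + move=> f /mapP [j _ ->]; split.
    * by move=> x; rewrite mem_filter mem_iota add0n => /andP [_ /andP [_ ->]].
    * move=> x y; rewrite !mem_filter !mem_iota !add0n => /andP [_ /andP [_ hx]] /andP [_ /andP [_ hy]] hxy.
      by split => //; split.
- have [Hfb Hfc] := IH2 f Hf.
  split.
  + move=> a b [h|[[-> hb]|[-> ha]]].
    * by have [h1 h2] := IH1 _ _ h; split; apply: ltnW.
    * by split => //; apply: ltnW; apply: Hfb.
    * by split => //; apply: ltnW; apply: Hfb.
  + move=> g; rewrite mem_cat => /orP [hg|/mapP [u hu ->]].
    * have hg' : g \in Fs0 by apply: (mem_rem hg).
      have [hb hc] := IH2 g hg'; split.
      -- by move=> x hx; apply: ltnW; apply: hb.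
      -- by move=> x y hx hy hxy; left; apply: hc.
    * split.
      -- move=> x; rewrite in_cons => /orP [/eqP -> //|hx].
         by apply: ltnW; apply: Hfb; apply: (mem_rem hx).
      -- move=> x y; rewrite !in_cons => /orP [/eqP ->|hx] /orP [/eqP ->|hy] hxy //.
         ++ by right; left; split => //; apply: (mem_rem hy).
         ++ by right; right; split => //; apply: (mem_rem hx).
         ++ by left; apply: Hfc => //; [apply: (mem_rem hx)|apply: (mem_rem hy)].
Qed.

Lemma stacked_zero k m Fs adj : stacked_graph k m Fs adj ->
  forall TT : nat -> nat -> R,
  (forall a b, TT a b = TT b a) ->
  (forall a b, TT a b <> 0%R -> adj a b) ->
  (forall a, (forall b b', TT a b <> 0%R -> TT a b' <> 0%R -> b <> b' -> adj b b') ->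
      forall b, TT a b = 0%R) ->
  forall a b, TT a b = 0%R.
Proof.
elim => [|n Fs0 adj0 f H IH Hf] TT Hsym Hsupp Hkey.
- move=> a; apply: Hkey => b b' hb hb' hbb'.
  have [_ [_ h1]] := Hsupp _ _ hb; have [_ [_ h2]] := Hsupp _ _ hb'.
  by split => //; split.
- have [Hinv1 Hinv2] := stacked_inv H.
  have [Hfb Hfc] := Hinv2 f Hf.
  have Hnb : forall b, TT n b <> 0%R -> b \in f.
    move=> b hb; case: (Hsupp _ _ hb) => [h|[[_ ->]//|[-> hn]]].
    + by have [h1 _] := Hinv1 _ _ h; rewrite ltnn in h1.
    + by have := Hfb _ hn; rewrite ltnn.
  have Z : forall b, TT n b = 0%R.
    apply: Hkey => b b' hb hb' hbb'; left; apply: Hfc => //; by apply: Hnb.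
  apply: IH => //.
  + move=> a b hab; case: (Hsupp _ _ hab) => [//|[[ea _]|[eb _]]].
    * by rewrite ea Z in hab.
    * by rewrite eb Hsym Z in hab.
  + move=> a Ha; apply: Hkey => b b' hb hb' hbb'; left; by apply: Ha.
Qed.

Lemma insub_val n a (ia : 'I_n) : (insub a : option 'I_n) = Some ia -> val ia = a.
Proof. by move=> E; have := @insubK _ _ 'I_n a; rewrite E. Qed.

Unset Implicit Arguments.
Close Scope R_scope.

Theorem theorem5p5 (d : nat) (hd : (2 <= d)%N)
  (n : nat) (Fs : seq (seq nat)) (adj : nat -> nat -> Prop)
  (Hstacked : stacked_graph d.+1 n Fs adj)
  (B : 'I_n -> hball d) (Hpack : is_packing B)
  (sigma : 'I_n -> 'I_n) (Hsigma : bijective sigma)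
  (Hiso : forall i j, tangent B i j <-> adj (val (sigma i)) (val (sigma j)))
  (c : 'I_n -> 'I_d.+1 -> R) (theta : 'I_n -> R)
  (Hc : forall i, on_sphere (c i))
  (Htheta : forall i, (0 < theta i < PI / 2)%R)
  (Hcap : forall i, cap_of_ball (B i) (c i) (theta i))
  (T : 'I_n -> 'I_n -> R)
  (Tsym : forall i j, T i j = T j i)
  (Tedge : forall i j, T i j <> 0%R -> tangent B i j)
  (Hstress : forall (i : 'I_n) (k : 'I_d.+1),
     \big[Rplus/0%R]_(j < n)
        (T i j * (polar_vertex (c j) (theta j) k - polar_vertex (c i) (theta i) k))%R
     = 0%R) :
  forall i j, T i j = 0%R.
Proof.
pose v := fun j => polar_vertex (c j) (theta j).
pose t := fun j => (sin (theta j) / cos (theta j))%R.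
have Hcos : forall j, (0 < cos (theta j))%R.
  move=> j; have := Htheta j => h; apply: cos_gt_0; lra.
have Hsin : forall j, (0 < sin (theta j))%R.
  move=> j; have := Htheta j => h; apply: sin_gt_0; have := PI_RGT_0; lra.
have Hsc : forall j, (cos (theta j) * cos (theta j) + sin (theta j) * sin (theta j) = 1)%R.
  move=> j; have := sin2_cos2 (theta j); rewrite /Rsqr; lra.
have Ht : forall j, (0 < t j)%R.
  by move=> j; rewrite /t; apply: Rdiv_lt_0_compat.
have Ev : forall j, v j = (fun k => / cos (theta j) * c j k)%R.
  move=> j; apply: functional_extensionality => k; rewrite /v /polar_vertex; field.
  by have := Hcos j; lra.
have G1 : forall j, dotp (v j) (v j) = (1 + t j * t j)%R.
  move=> j; rewrite Ev dotp_scal dotpC dotp_scal (Hc j) /t.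
  have := Hcos j; have := Hsc j => h1 h2.
  have -> : (1 + sin (theta j) / cos (theta j) * (sin (theta j) / cos (theta j)) =
     (cos (theta j) * cos (theta j) + sin (theta j) * sin (theta j)) / (cos (theta j) * cos (theta j)))%R
    by field; lra.
  rewrite h1; field; lra.
have Hm : (1 < d.+1)%nat by rewrite ltnS; apply: (@leq_trans 2).
have G2 : forall j l, tangent B j l -> dotp (v j) (v l) = (1 - t j * t l)%R.
  move=> j l [_ [p [[Hpj Hpl] Hpu]]].
  have Hcl : dotp (c j) (c l) = (cos (theta j) * cos (theta l) - sin (theta j) * sin (theta l))%R.
    apply: (cap_tangent Hm (Hc j) (Hc l) (Hcos j) (Hsin j) (Hcos l) (Hsin l) (Hsc j) (Hsc l)).
    - exists (stereo p).
      have [h1 h2] := proj2 (Hcap j (stereo p)) (ex_intro _ p (conj Hpj erefl)).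
      have [_ h3] := proj2 (Hcap l (stereo p)) (ex_intro _ p (conj Hpl erefl)).
      by split; [apply: h1|split].
    - have toP : forall y, dotp y y = 1%R -> (cos (theta j) <= dotp y (c j))%R ->
          (cos (theta l) <= dotp y (c l))%R -> y = stereo p.
        move=> y h1 h2 h3.
        have [p1 [hp1 e1]] := proj1 (Hcap j y) (conj h1 h2).
        have [p2 [hp2 e2]] := proj1 (Hcap l y) (conj h1 h3).
        have e12 : p1 = p2 by apply: stereo_inj; rewrite -e1 -e2.
        subst p2.
        have e : p = p1 by apply: Hpu; split.
        by rewrite e1 e.
      move=> y y' h1 h2 h3 h1' h2' h3'.
      by rewrite (toP _ h1 h2 h3) (toP _ h1' h2' h3').
  rewrite !Ev dotp_scal dotpC dotp_scal dotpC Hcl /t.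
  have := Hcos j; have := Hcos l => h1 h2.
  field; lra.
have Key : forall i, (forall j j', T i j <> 0%R -> T i j' <> 0%R -> j <> j' -> tangent B j j') ->
    forall j, T i j = 0%R.
  move=> i Hcl.
  apply: (@key_alg n d.+1 v t (tangent B) i (T i)) => //.
  - by move=> j; apply: Tedge.
  - by move=> k; apply: Hstress.
case: Hsigma => g Hg1 Hg2.
pose TT := fun a b => match (insub a : option 'I_n), (insub b : option 'I_n) with
  | Some ia, Some ib => T (g ia) (g ib) | _, _ => 0%R end.
have ETT : forall i j, TT (val (sigma i)) (val (sigma j)) = T i j.
  by move=> i j; rewrite /TT !valK !Hg1.
have Z := stacked_zero Hstacked (TT := TT).
move=> i j; rewrite -ETT; apply: Z.
- move=> a b; rewrite /TT.
  case: (insub a) => [ia|]; case: (insub b) => [ib|] //.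
- move=> a b; rewrite /TT.
  case Ea: (insub a) => [ia|] //; case Eb: (insub b) => [ib|] // h.
  move/Tedge: h => /Hiso; by rewrite !Hg2 (insub_val Ea) (insub_val Eb).
- move=> a Ha b; rewrite /TT.
  case Ea: (insub a) => [ia|] //; case Eb: (insub b) => [ib|] //.
  apply: Key => j1 j2 h1 h2 hjj'.
  apply/Hiso; apply: Ha.
  + by rewrite /TT Ea valK Hg1.
  + by rewrite /TT Ea valK Hg1.
  + move=> /val_inj /(can_inj Hg1); exact: hjj'.
Qed.
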